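(* Let $q\ge 3$, $k\ge 1$ and $h\geq 2$ be integers with $h\le\lfloor q/2\rfloor$. Then $$SO(L_{q,h,k})=(2qk-5k+5)\sqrt{2}+(4k-4)\sqrt{13}.$$
   Context: For a finite simple graph $G$, $SO(G)=\sum_{uv\in E(G)}\sqrt{d_u^2+d_v^2}$, where $d_u$ is the degree of $u$ in $G$ (the Sombor index). The graph $L_{q,h,k}$ is the link of $k$ disjoint copies $G_1,\ldots,G_k$ of the cycle $C_q$ with respect to vertices $x_i,y_i\in V(G_i)$ at distance $h$ in $G_i$; i.e. it is obtained from the disjoint union of the $k$ cycles by adding the edges $y_ix_{i+1}$ for $i=1,\ldots,k-1$. *)

(* Defs.v *)
From HB Require Import structures.
From mathcomp Require Import all_boot all_order all_algebra.
From mathcomp Require Import reals.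
Set Implicit Arguments. Unset Strict Implicit. Unset Printing Implicit Defensive.
Import Order.TTheory GRing.Theory Num.Theory.

(* A finite simple graph is given by an edge relation [e] on a finType
   (intended symmetric and irreflexive). *)
Definition degree (T : finType) (e : rel T) (u : T) : nat := #|[set v | e u v]|.

(* Each unordered edge {u,v} of a symmetric relation is counted twice in the
   sum over ordered adjacent pairs (u,v), hence the factor 1/2. *)
Definition sombor (R : rcfType) (T : finType) (e : rel T) : R :=
  (2%:R)^-1 * \sum_(u : T) \sum_(v : T | e u v)
     Num.sqrt (((degree e u)%:R : R) ^+ 2 + ((degree e v)%:R : R) ^+ 2).

Definition cycle_adj (q : nat) (a b : 'I_q) : bool :=
  (b == (a.+1 %% q) :> nat) || (a == (b.+1 %% q) :> nat).

(* Link of k copies G_1..G_k of a graph (vertex set 'I_q, edge relation g)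
   with respect to vertices x, y (the same in each copy): the disjoint union
   plus edges y_i x_{i+1}, i = 1..k-1.  Vertices are pairs (copy i, vertex j). *)
Definition link_adj (k q : nat) (g : rel 'I_q) (x y : 'I_q)
    (u v : 'I_k * 'I_q) : bool :=
  ((u.1 == v.1) && g u.2 v.2)
  || [&& (v.1 == u.1.+1 :> nat), u.2 == y & v.2 == x]
  || [&& (u.1 == v.1.+1 :> nat), v.2 == y & u.2 == x].

Definition cycle_dist (q : nat) (a b : 'I_q) : nat :=
  minn ((a + q - b) %% q) ((b + q - a) %% q).

(* L_{q,h,k}: link of k copies of C_q w.r.t. x_i, y_i at distance h. *)
Definition L_adj (q k : nat) (x y : 'I_q) : rel ('I_k * 'I_q) :=
  @link_adj k q (@cycle_adj q) x y.

(* Main.v *)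
Require Import Defs.
From HB Require Import structures.
From mathcomp Require Import all_boot all_order all_algebra.
From mathcomp Require Import reals.
From mathcomp Require Import zify ring lra.
Import Order.TTheory GRing.Theory Num.Theory.

Lemma adjE (q : nat) (a b : 'I_q) :
  cycle_adj a b = (b == ordS a) || (b == ord_pred a).
Proof.
rewrite /cycle_adj; congr (_ || _).
apply/eqP/eqP => H.
- have : a = ordS b by apply: val_inj.
  by move=> ->; rewrite ordSK.
- rewrite H; change (val a = val (ordS (ord_pred a))); by rewrite ord_predK.
Qed.

Lemma ordS_neq (q : nat) (a : 'I_q) : (3 <= q)%N -> ordS a != ord_pred a.
Proof.
move=> Hq; apply/eqP => H.
have := congr1 (@ordS q) H; rewrite ord_predK => /(congr1 val) /=.
have Ha := ltn_ord a.
have [Hlt|Hge] := ltnP a.+1 q.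
- rewrite (modn_small Hlt).
  have [Hlt2|Hge2] := ltnP a.+2 q.
  + rewrite (modn_small Hlt2); lia.
  + have E : a.+2 = q by lia.
    rewrite E modnn; lia.
- have E : a.+1 = q by lia.
  rewrite E modnn modn_small; lia.
Qed.

Lemma adj_sum (V : Type) (idx : V) (op : Monoid.com_law idx) (q : nat)
  (a : 'I_q) (F : 'I_q -> V) : (3 <= q)%N ->
  \big[op/idx]_(b | cycle_adj a b) F b = op (F (ordS a)) (F (ord_pred a)).
Proof.
move=> Hq; have Hn := @ordS_neq _ a Hq.
rewrite (bigD1 (ordS a)) ?adjE ?eqxx //= (bigD1 (ord_pred a)) /=; last first.
  by rewrite adjE eqxx orbT eq_sym.
rewrite big1 ?Monoid.mulm1 // => b.
by rewrite adjE => /andP[/andP[/orP[] -> ]].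
Qed.

Lemma sum_pairE (V : Type) (idx : V) (op : Monoid.com_law idx) (I J : finType)
  (G : I * J -> V) :
  \big[op/idx]_p G p = \big[op/idx]_i \big[op/idx]_j G (i, j).
Proof. by rewrite pair_bigA; apply: eq_bigr => -[]. Qed.

Lemma sum_eqn (V : Type) (idx : V) (op : Monoid.com_law idx) (k n : nat) (X : V) :
  \big[op/idx]_(j < k) (if val j == n then X else idx) = if (n < k)%N then X else idx.
Proof.
case: (ltnP n k) => H.
- by rewrite -big_mkcond (big_pred1 (Ordinal H)) // => j.
- rewrite big1 // => -[j Hj] _; rewrite ifF //; apply/eqP => /= E; lia.
Qed.

Lemma sum_eqSn (V : Type) (idx : V) (op : Monoid.com_law idx) (k n : nat) (X : V) :
  (n < k)%N ->
  \big[op/idx]_(j < k) (if n == (val j).+1 then X else idx) = if (0 < n)%N then X else idx.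
Proof.
move=> Hn; case: n Hn => [|n] Hn /=.
- by rewrite big1.
- have H : (n < k)%N by lia.
  by rewrite -big_mkcond (big_pred1 (Ordinal H)) // => j /=; rewrite eqSS eq_sym.
Qed.

Lemma sum_eq1 (V : Type) (idx : V) (op : Monoid.com_law idx) (I : finType) (i : I) (X : I -> V) :
  \big[op/idx]_j (if j == i then X j else idx) = X i.
Proof. by rewrite -big_mkcond big_pred1_eq. Qed.

Lemma dist_ordS (q : nat) (a b : 'I_q) : (3 <= q)%N -> b = ordS a -> ((b + q - a) %% q = 1)%N.
Proof.
move=> Hq ->; rewrite /=; have Ha := ltn_ord a.
have [Hlt|Hge] := ltnP a.+1 q.
- rewrite (modn_small Hlt).
  have -> : (a.+1 + q - a = 1 + q)%N by lia.
  by rewrite modnDr modn_small //; lia.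
- have E : a.+1 = q by lia.
  rewrite E modnn add0n.
  have -> : (q - a = 1)%N by lia.
  by rewrite modn_small //; lia.
Qed.

Lemma adj_irr (q : nat) (a : 'I_q) : (3 <= q)%N -> cycle_adj a a = false.
Proof.
move=> Hq; rewrite /cycle_adj orbb; apply/negP => /eqP.
have Ha := ltn_ord a.
have [Hlt|Hge] := ltnP a.+1 q.
- rewrite (modn_small Hlt); lia.
- have E : a.+1 = q by lia.
  rewrite E modnn; lia.
Qed.

Lemma dist_facts (q : nat) (x y : 'I_q) : (3 <= q)%N -> (2 <= cycle_dist x y)%N ->
  [/\ x != y, cycle_adj x y = false & cycle_adj y x = false].
Proof.
move=> Hq Hd.
have Hxy : x != y.
  apply/eqP => E; move: Hd; rewrite /cycle_dist E.
  have -> : (y + q - y = q)%N by lia.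
  by rewrite modnn.
have H1 : forall a b : 'I_q, (2 <= minn ((a + q - b) %% q) ((b + q - a) %% q))%N ->
   cycle_adj a b = false.
  move=> a b Hab; rewrite adjE; apply/negP => /orP[/eqP E|/eqP E].
  - move: Hab; rewrite (@dist_ordS _ _ _ Hq E); lia.
  - have E2 : a = ordS b by rewrite E ord_predK.
    move: Hab; rewrite (@dist_ordS _ _ _ Hq E2); lia.
split => //; apply: H1 => //.
by rewrite minnC.
Qed.

Lemma if_or3 (V : Type) (idx : V) (op : Monoid.com_law idx) (a b c : bool) (X : V) :
  ~~ (a && b) -> ~~ (a && c) -> ~~ (b && c) ->
  (if a || b || c then X else idx) =
  op (op (if a then X else idx) (if b then X else idx)) (if c then X else idx).
Proof.
by case: a; case: b; case: c => //= _ _ _; rewrite ?Monoid.mulm1 ?Monoid.mul1m.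
Qed.

Lemma split_sum (V : Type) (idx : V) (op : Monoid.com_law idx) (k q : nat)
  (x y : 'I_q) (u : 'I_k * 'I_q) (F : 'I_k * 'I_q -> V) :
  \big[op/idx]_v (if L_adj x y u v then F v else idx) =
  op (op (\big[op/idx]_v (if (u.1 == v.1) && cycle_adj u.2 v.2 then F v else idx))
         (\big[op/idx]_(v : 'I_k * 'I_q) (if [&& val v.1 == (val u.1).+1, u.2 == y & v.2 == x] then F v else idx)))
     (\big[op/idx]_(v : 'I_k * 'I_q) (if [&& val u.1 == (val v.1).+1, v.2 == y & u.2 == x] then F v else idx)).
Proof.
rewrite -!big_split; apply: eq_bigr => -[j b] _; case: u => i a /=.
rewrite /L_adj /link_adj /=; apply: if_or3.
- apply/negP => /andP[/andP[/eqP E _] /and3P[H _ _]]; move/eqP: H; rewrite E; lia.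
- apply/negP => /andP[/andP[/eqP E _] /and3P[H _ _]]; move/eqP: H; rewrite E; lia.
- apply/negP => /andP[/and3P[/eqP H1 _ _] /and3P[/eqP H2 _ _]]; lia.
Qed.

Lemma partA (V : Type) (idx : V) (op : Monoid.com_law idx) (k q : nat)
  (u : 'I_k * 'I_q) (F : 'I_k * 'I_q -> V) : (3 <= q)%N ->
  \big[op/idx]_v (if (u.1 == v.1) && cycle_adj u.2 v.2 then F v else idx) =
  op (F (u.1, ordS u.2)) (F (u.1, ord_pred u.2)).
Proof.
move=> Hq; rewrite sum_pairE (bigD1 u.1) //= [X in op _ X]big1 ?Monoid.mulm1; last first.
  move=> j Hj; rewrite big1 // => b _; rewrite ifF //; apply/negP => /andP[/eqP E _]; move: Hj; by rewrite E eqxx.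
by rewrite eqxx -big_mkcond adj_sum.
Qed.

Lemma partB (V : Type) (idx : V) (op : Monoid.com_law idx) (k q : nat)
  (x y : 'I_q) (u : 'I_k * 'I_q) (X : V) :
  \big[op/idx]_(v : 'I_k * 'I_q) (if [&& val v.1 == (val u.1).+1, u.2 == y & v.2 == x] then X else idx) =
  if (u.2 == y) && ((val u.1).+1 < k)%N then X else idx.
Proof.
rewrite sum_pairE; case Hy: (u.2 == y) => /=; last first.
  by rewrite big1 // => j _; rewrite big1 // => b _; rewrite andbF.
rewrite -(@sum_eqn _ _ op k (val u.1).+1 X); apply: eq_bigr => j _.
case: (val j == (val u.1).+1) => /=; last by rewrite big1.
by rewrite sum_eq1.
Qed.

Lemma partC (V : Type) (idx : V) (op : Monoid.com_law idx) (k q : nat)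
  (x y : 'I_q) (u : 'I_k * 'I_q) (X : V) :
  \big[op/idx]_(v : 'I_k * 'I_q) (if [&& val u.1 == (val v.1).+1, v.2 == y & u.2 == x] then X else idx) =
  if (u.2 == x) && (0 < val u.1)%N then X else idx.
Proof.
rewrite sum_pairE; case Hx: (u.2 == x) => /=; last first.
  by rewrite big1 // => j _; rewrite big1 // => b _; rewrite !andbF.
rewrite -(@sum_eqSn _ _ op _ _ X (ltn_ord u.1)); apply: eq_bigr => j _.
case: (val u.1 == (val j).+1) => /=; last by rewrite big1.
under eq_bigr => b _ do rewrite andbT.
by rewrite sum_eq1.
Qed.

Definition sg (q k : nat) (x y : 'I_q) (u : 'I_k * 'I_q) : nat :=
  ((u.2 == x) && (0 < val u.1)%N) + ((u.2 == y) && ((val u.1).+1 < k)%N).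

Arguments sg {q k} x y u.

Lemma deg_eq (q k : nat) (x y : 'I_q) (u : 'I_k * 'I_q) : (3 <= q)%N ->
  degree (L_adj x y) u = (2 + sg x y u)%N.
Proof.
move=> Hq; rewrite /degree -sum1_card big_mkcond /=.
under eq_bigr => v _ do rewrite inE.
rewrite (split_sum _ _ _ _ _ x y u (fun _ => 1%N)) partA // partB partC /sg.
by case: ((u.2 == y) && _); case: ((u.2 == x) && _).
Qed.

Lemma nat_if (b : bool) : (b : nat) = if b then 1%N else 0%N.
Proof. by case: b. Qed.

Lemma sum_bX (q k : nat) (x : 'I_q) :
  (\sum_(u : 'I_k.+1 * 'I_q) ((u.2 == x) && (0 < val u.1)%N) = k)%N.
Proof.
rewrite sum_pairE.
under eq_bigr => i _ do (under eq_bigr => a _ do rewrite nat_if if_and; rewrite sum_eq1).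
rewrite big_ord_recl /=.
under eq_bigr => i _ do rewrite /bump /=.
by rewrite sum_nat_const card_ord muln1.
Qed.

Lemma sum_bY (q k : nat) (y : 'I_q) :
  (\sum_(u : 'I_k.+1 * 'I_q) ((u.2 == y) && ((val u.1).+1 < k.+1)%N) = k)%N.
Proof.
rewrite sum_pairE.
under eq_bigr => i _ do (under eq_bigr => a _ do rewrite nat_if if_and; rewrite sum_eq1).
rewrite big_ord_recr /= ltnn addn0.
under eq_bigr => i _ do rewrite ltnS ltn_ord.
by rewrite sum_nat_const card_ord muln1.
Qed.

Lemma sum_sg (q k : nat) (x y : 'I_q) :
  (\sum_(u : 'I_k.+1 * 'I_q) sg x y u = k + k)%N.
Proof. by rewrite /sg big_split /= sum_bX sum_bY. Qed.

Lemma sum_sgS (q k : nat) (x y : 'I_q) :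
  (\sum_(u : 'I_k.+1 * 'I_q) sg x y (u.1, ordS u.2) = k + k)%N.
Proof.
rewrite -(sum_sg q k x y) !sum_pairE; apply: eq_bigr => i _ /=.
by rewrite [RHS](reindex_inj (@ordS_inj q)).
Qed.

Lemma sum_sgP (q k : nat) (x y : 'I_q) :
  (\sum_(u : 'I_k.+1 * 'I_q) sg x y (u.1, ord_pred u.2) = k + k)%N.
Proof.
rewrite -(sum_sg q k x y) !sum_pairE; apply: eq_bigr => i _ /=.
by rewrite [RHS](reindex_inj (@ord_pred_inj q)).
Qed.

Lemma sg_le1 (q k : nat) (x y : 'I_q) (u : 'I_k * 'I_q) : x != y -> (sg x y u <= 1)%N.
Proof.
move=> Hxy; rewrite /sg; case: eqP => [->|] /=; last by case: (_ && _).
by rewrite (negbTE Hxy) addn0; case: (_ < _)%N.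
Qed.

Lemma sg_pos (q k : nat) (x y : 'I_q) (u : 'I_k * 'I_q) : (0 < sg x y u)%N -> (u.2 == x) || (u.2 == y).
Proof. by rewrite /sg; case: (u.2 == x); case: (u.2 == y). Qed.

Lemma sg_adj (q k : nat) (x y : 'I_q) (i : 'I_k) (a b : 'I_q) : (3 <= q)%N ->
  x != y -> cycle_adj x y = false -> cycle_adj y x = false -> cycle_adj a b ->
  (sg x y (i, a) * sg x y (i, b) = 0)%N.
Proof.
move=> Hq Hxy H1 H2 Hab.
case Ha: (sg x y (i, a)) => [|m] //; case Hb: (sg x y (i, b)) => [|n]; first by rewrite muln0.
have /sg_pos /= Pa : (0 < sg x y (i, a))%N by rewrite Ha.
have /sg_pos /= Pb : (0 < sg x y (i, b))%N by rewrite Hb.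
move: Hab; case/orP: Pa => /eqP ->; case/orP: Pb => /eqP ->;
  by rewrite ?H1 ?H2 ?adj_irr.
Qed.
Local Open Scope ring_scope.

Definition Fv (R : rcfType) (m n : nat) : R :=
  Num.sqrt (((2 + m)%N%:R : R) ^+ 2 + ((2 + n)%N%:R : R) ^+ 2).

Lemma Fval (R : rcfType) (m n : nat) : (m <= 1)%N -> (n <= 1)%N -> (m * n = 0)%N ->
  Fv R m n = Fv R 0 0 + (m + n)%N%:R * (Fv R 1 0 - Fv R 0 0).
Proof.
case: m => [|[|m]] //; case: n => [|[|n]] // _ _ _.
- ring.
- have -> : Fv R 0 1 = Fv R 1 0 by rewrite /Fv addrC.
  ring.
- ring.
Qed.

Lemma if_mul (R : rcfType) (b : bool) (c : R) : (if b then c else 0) = (b : nat)%:R * c.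
Proof. by case: b; rewrite ?mul1r ?mul0r. Qed.

Lemma partB2 (V : Type) (idx : V) (op : Monoid.com_law idx) (k q : nat)
  (x y : 'I_q) (u : 'I_k * 'I_q) (F : 'I_k * 'I_q -> V) (X : V) :
  (forall v : 'I_k * 'I_q, [&& val v.1 == (val u.1).+1, u.2 == y & v.2 == x] -> F v = X) ->
  \big[op/idx]_(v : 'I_k * 'I_q) (if [&& val v.1 == (val u.1).+1, u.2 == y & v.2 == x] then F v else idx) =
  if (u.2 == y) && ((val u.1).+1 < k)%N then X else idx.
Proof.
move=> HF; rewrite -(@partB _ _ op _ _ x y u X); apply: eq_bigr => v _; case: ifP => // H; exact: HF.
Qed.

Lemma partC2 (V : Type) (idx : V) (op : Monoid.com_law idx) (k q : nat)
  (x y : 'I_q) (u : 'I_k * 'I_q) (F : 'I_k * 'I_q -> V) (X : V) :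
  (forall v : 'I_k * 'I_q, [&& val u.1 == (val v.1).+1, v.2 == y & u.2 == x] -> F v = X) ->
  \big[op/idx]_(v : 'I_k * 'I_q) (if [&& val u.1 == (val v.1).+1, v.2 == y & u.2 == x] then F v else idx) =
  if (u.2 == x) && (0 < val u.1)%N then X else idx.
Proof.
move=> HF; rewrite -(@partC _ _ op _ _ x y u X); apply: eq_bigr => v _; case: ifP => // H; exact: HF.
Qed.

Lemma inner (R : rcfType) (q k : nat) (x y : 'I_q) (u : 'I_k * 'I_q) : (3 <= q)%N ->
  x != y -> cycle_adj x y = false -> cycle_adj y x = false ->
  \sum_(v | L_adj x y u v)
     Num.sqrt (((degree (L_adj x y) u)%:R : R) ^+ 2 + ((degree (L_adj x y) v)%:R : R) ^+ 2)
  = Fv R 0 0 *+ 2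
    + ((sg x y u + sg x y (u.1, ordS u.2)) + (sg x y u + sg x y (u.1, ord_pred u.2)))%N%:R
       * (Fv R 1 0 - Fv R 0 0)
    + (((u.2 == y) && ((val u.1).+1 < k)%N) + ((u.2 == x) && (0 < val u.1)%N))%N%:R * Fv R 1 1.
Proof.
move=> Hq Hxy H1 H2.
rewrite big_mkcond (split_sum _ _ _ _ _ x y u) partA //.
rewrite (partB2 _ _ _ _ _ x y u _ (Fv R 1 1)); last first.
  move=> v H; move/and3P: H => [H0 H2b H3]; move/eqP: H0 => E1; move/eqP: H2b => E2; move/eqP: H3 => E3.
  rewrite !deg_eq // /Fv /sg E2 E3 !eqxx (negbTE Hxy) eq_sym (negbTE Hxy) /= E1.
  by rewrite (leq_trans _ (ltn_ord v.1)) ?E1.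
rewrite (partC2 _ _ _ _ _ x y u _ (Fv R 1 1)); last first.
  move=> v H; move/and3P: H => [H0 H2b H3]; move/eqP: H0 => E1; move/eqP: H2b => E2; move/eqP: H3 => E3.
  rewrite !deg_eq // /Fv /sg E2 E3 !eqxx (negbTE Hxy) eq_sym (negbTE Hxy) /= E1.
  by rewrite (leq_trans _ (ltn_ord u.1)) ?E1.
rewrite !deg_eq //.
rewrite -/(Fv R _ _) -/(Fv R _ _).
rewrite (@Fval R _ _ (@sg_le1 _ _ x y _ Hxy) (@sg_le1 _ _ x y _ Hxy) (@sg_adj _ _ x y _ _ _ Hq Hxy H1 H2 _)); last by rewrite adjE eqxx.
rewrite (@Fval R _ _ (@sg_le1 _ _ x y _ Hxy) (@sg_le1 _ _ x y _ Hxy) (@sg_adj _ _ x y _ _ _ Hq Hxy H1 H2 _)); last by rewrite adjE eqxx orbT.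
rewrite -surjective_pairing.
set s0 := sg x y u; set s1 := sg x y (u.1, ordS u.2); set s2 := sg x y (u.1, ord_pred u.2).
rewrite !if_mul /= !natrD mulr2n; ring.
Qed.

Lemma Fsq (R : rcfType) (m n c : nat) :
  ((m%:R : R) ^+ 2 + (n%:R) ^+ 2 = (c%:R) ^+ 2 * 2%:R) ->
  Num.sqrt ((m%:R : R) ^+ 2 + (n%:R) ^+ 2) = c%:R * Num.sqrt 2%:R.
Proof.
move=> ->; rewrite sqrtrM ?exprn_ge0 // sqrtr_sqr ger0_norm //.
Qed.

Lemma F00 (R : rcfType) : Fv R 0 0 = 2%:R * Num.sqrt 2%:R.
Proof. by rewrite /Fv (@Fsq R _ _ 2) // addn0; ring. Qed.

Lemma F11 (R : rcfType) : Fv R 1 1 = 3%:R * Num.sqrt 2%:R.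
Proof. by rewrite /Fv (@Fsq R _ _ 3) //; ring. Qed.

Lemma F10 (R : rcfType) : Fv R 1 0 = Num.sqrt 13%:R.
Proof. by rewrite /Fv -!natrX -natrD. Qed.

Lemma sumN (q k : nat) (x y : 'I_q) :
  (\sum_(u : 'I_k.+1 * 'I_q) (sg x y u + sg x y (u.1, ordS u.2) + (sg x y u + sg x y (u.1, ord_pred u.2))) = (k + k) + (k + k) + ((k + k) + (k + k)))%N.
Proof.
transitivity (\sum_(u : 'I_k.+1 * 'I_q) sg x y u + \sum_(u : 'I_k.+1 * 'I_q) sg x y (u.1, ordS u.2)
  + (\sum_(u : 'I_k.+1 * 'I_q) sg x y u + \sum_(u : 'I_k.+1 * 'I_q) sg x y (u.1, ord_pred u.2)))%N.
  by rewrite -!big_split.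
by rewrite sum_sg sum_sgS sum_sgP.
Qed.

Lemma sumXY (q k : nat) (x y : 'I_q) :
  (\sum_(u : 'I_k.+1 * 'I_q) (((u.2 == y) && ((val u.1).+1 < k.+1)%N) + ((u.2 == x) && (0 < val u.1)%N)) = k + k)%N.
Proof. by rewrite big_split /= sum_bY sum_bX. Qed.

Lemma step1 (R : realType) (q k : nat) (x y : 'I_q) (Hq : (3 <= q)%N) (Hxy : x != y) (H1 : cycle_adj x y = false) (H2 : cycle_adj y x = false) :
  sombor R (@L_adj q k.+1 x y) = 2^-1 * \sum_(u : 'I_k.+1 * 'I_q) (Fv R 0 0 *+ 2
    + ((sg x y u + sg x y (u.1, ordS u.2)) + (sg x y u + sg x y (u.1, ord_pred u.2)))%N%:R
       * (Fv R 1 0 - Fv R 0 0)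
    + (((u.2 == y) && ((val u.1).+1 < k.+1)%N) + ((u.2 == x) && (0 < val u.1)%N))%N%:R * Fv R 1 1).
Proof.
by rewrite /sombor (eq_bigr _ (fun u _ => @inner R q k.+1 x y u Hq Hxy H1 H2)).
Qed.
Lemma step2 (R : realType) (q k : nat) (x y : 'I_q) :
  2^-1 * \sum_(u : 'I_k.+1 * 'I_q) (Fv R 0 0 *+ 2
    + ((sg x y u + sg x y (u.1, ordS u.2)) + (sg x y u + sg x y (u.1, ord_pred u.2)))%N%:R
       * (Fv R 1 0 - Fv R 0 0)
    + (((u.2 == y) && ((val u.1).+1 < k.+1)%N) + ((u.2 == x) && (0 < val u.1)%N))%N%:R * Fv R 1 1)
  = 2^-1 * (Fv R 0 0 *+ 2 *+ (k.+1 * q) + ((k + k) + (k + k) + ((k + k) + (k + k)))%N%:R * (Fv R 1 0 - Fv R 0 0)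
      + (k + k)%N%:R * Fv R 1 1).
Proof.
rewrite big_split /= big_split /= sumr_const card_prod !card_ord -!mulr_suml -!natr_sum.
by rewrite sumN sumXY.
Qed.
Lemma alg (F : numFieldType) (s2 s13 : F) (q k : nat) :
  2^-1 * (2%:R * s2 *+ 2 *+ (k.+1 * q) + ((k + k) + (k + k) + ((k + k) + (k + k)))%N%:R * (s13 - 2%:R * s2)
      + (k + k)%N%:R * (3%:R * s2)) =
    ((2 * q * k.+1 + 5)%:R - (5 * k.+1)%:R) * s2
    + ((4 * k.+1)%:R - 4%:R) * s13.
Proof.
rewrite -[2%:R * s2 *+ 2 *+ _]mulr_natr -[2%:R * s2 *+ 2]mulr_natr.
by field.
Qed.


Lemma step3 (R : realType) (q k : nat) :
  2^-1 * (Fv R 0 0 *+ 2 *+ (k.+1 * q) + ((k + k) + (k + k) + ((k + k) + (k + k)))%N%:R * (Fv R 1 0 - Fv R 0 0)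
      + (k + k)%N%:R * Fv R 1 1) =
    ((2 * q * k.+1 + 5)%:R - (5 * k.+1)%:R) * Num.sqrt 2%:R
    + ((4 * k.+1)%:R - 4%:R) * Num.sqrt 13%:R.
Proof. by rewrite F00 F10 F11 alg. Qed.

Theorem mainTheorem9 (R : realType) (q h k : nat) (x y : 'I_q) :
  (3 <= q)%N -> (1 <= k)%N -> (2 <= h)%N -> (h <= q %/ 2)%N ->
  cycle_dist x y = h ->
  sombor R (@L_adj q k x y) =
    ((2 * q * k + 5)%:R - (5 * k)%:R) * Num.sqrt 2%:R
    + ((4 * k)%:R - 4%:R) * Num.sqrt 13%:R.
Proof.
move=> Hq Hk Hh Hhq Hd.
have Hd2 : (2 <= cycle_dist x y)%N by rewrite Hd.
have [Hxy H1 H2] := @dist_facts q x y Hq Hd2.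
case: k Hk => [//|k] _.
by rewrite (@step1 R q k x y Hq Hxy H1 H2) step2 step3.
Qed.
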